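(* Let $0<x<\pi$. (a) For every $\mu>-1/2$, $|L(x,\mu)|<M\left((2\mu+1)\sin\frac{x}{2}\right)$; equivalently, for every $\lambda>0$, $|\mathrm{L}(x,\lambda)|<M(\lambda\sin x)$. (b) If $\lambda>0$ and $\lambda\sin x>t_0$, then $|\mathrm{L}(x,\lambda)|<\operatorname{arccot}(\lambda\sin x)$. (c) If $\mu>-1/2$ and $(2\mu+1)\sin\frac{x}{2}<1$, then \[ |L(x,\mu)|<\ln\frac{1}{(2\mu+1)\sin\frac{x}{2}}+C_2,\qquad C_2=\ln(1+\sqrt2). \]
   Context: For real $x$ and $\mu>-1$, $L(x,\mu)=\sum_{k=1}^\infty \frac{e^{ikx}}{k+\mu}$ (convergent for $x\notin 2\pi\mathbb{Z}$), and for $\lambda>-1$, $\mathrm{L}(x,\lambda)=e^{-ix}L\left(2x,\frac{\lambda-1}{2}\right)=2\sum_{k=1}^\infty\frac{e^{(2k-1)ix}}{2k+\lambda-1}$. For $t>0$, $M(t)=\int_0^\infty \frac{e^{-tu}}{\sqrt{u^2+1}}\,du$. The constant $t_0$ is defined as $t_0=\inf\{s>0:\ M(t)<\operatorname{arccot} t \text{ for all } t>s\}$ (numerically $t_0\approx 0.7096$, the positive root of $M(t)=\operatorname{arccot}t$). *)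

(* Defs.v *)
From Stdlib Require Import Reals.
From Coquelicot Require Import Coquelicot.
Open Scope R_scope.

(* Terms of L(x,mu) = sum_{k>=1} e^{ikx}/(k+mu), indexed from n = 0 (k = n+1),
   split into real and imaginary parts (e^{ikx} = cos(kx) + i sin(kx)). *)
Definition L_re (x mu : R) : R :=
  Series (fun n : nat => cos (INR (S n) * x) / (INR (S n) + mu)).
Definition L_im (x mu : R) : R :=
  Series (fun n : nat => sin (INR (S n) * x) / (INR (S n) + mu)).

Definition L (x mu : R) : C := (L_re x mu, L_im x mu).

Definition cexpi (x : R) : C := (cos x, sin x).

Definition LL (x lam : R) : C := Cmult (cexpi (- x)) (L (2 * x) ((lam - 1) / 2)).

Definition M (t : R) : R :=
  RInt_gen (fun u => exp (- (t * u)) / sqrt (u ^ 2 + 1))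
           (at_point 0) (Rbar_locally p_infty).

Definition arccot (t : R) : R := PI / 2 - atan t.

(* t0 = inf { s > 0 : M(t) < arccot t for all t > s }  (in Rbar; +oo if empty) *)
Definition t0 : Rbar :=
  Glb_Rbar (fun s => 0 < s /\ forall t, s < t -> M t < arccot t).

(* Main.v *)
Require Import Defs.
From Stdlib Require Import Reals.
From Coquelicot Require Import Coquelicot.
From Stdlib Require Import Lra Psatz Classical.
Open Scope R_scope.


Lemma exp_pow' a n : exp a ^ n = exp (INR n * a).
Proof.
induction n as [|n IH].
- simpl. rewrite Rmult_0_l, exp_0. reflexivity.
- rewrite S_INR. simpl pow. rewrite IH. rewrite <- exp_plus. f_equal. ring.
Qed.

Lemma cont_d (f : R -> R) x : ex_derive f x -> continuous f x.
Proof. intros H. apply (ex_derive_continuous (K:=R_AbsRing) (V:=R_NormedModule)). exact H. Qed.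

Lemma ex_RInt_c (f : R -> R) a b : (forall z, continuous f z) -> ex_RInt f a b.
Proof. intros H. apply (ex_RInt_continuous (V:=R_CompleteNormedModule)). intros; apply H. Qed.

Lemma RInt_exp r a b : r <> 0 ->
  RInt (fun u => exp (-(r*u))) a b = (exp (-(r*a)) - exp (-(r*b)))/r.
Proof.
intros Hr.
apply is_RInt_unique.
assert (H := is_RInt_derive (fun u => - exp (-(r*u)) / r) (fun u => exp (-(r*u))) a b).
replace ((exp (-(r*a)) - exp (-(r*b)))/r) with (minus (- exp (-(r*b)) / r) (- exp (-(r*a)) / r)).
2:{ unfold minus, plus, opp; simpl. field. exact Hr. }
apply H.
- intros x _. auto_derive. auto. field. exact Hr.
- intros x _. apply cont_d. auto_derive. auto.
Qed.

Lemma lim_exp r : 0 < r ->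
  is_lim (fun b => RInt (fun u => exp (-(r*u))) 0 b) p_infty (1/r).
Proof.
intros Hr.
apply is_lim_spec. intros eps. simpl.
exists (- ln (r * eps) / r). intros b Hb.
rewrite RInt_exp by lra. rewrite Rmult_0_r, Ropp_0, exp_0.
assert (He: exp (-(r*b)) < r * eps).
{ rewrite <- (exp_ln (r*eps)). apply exp_increasing.
  apply Rmult_lt_compat_l with (r:=r) in Hb; auto.
  replace (r * (- ln (r * eps) / r)) with (- ln (r*eps)) in Hb by (field; lra). lra.
  apply Rmult_lt_0_compat; auto. apply cond_pos. }
assert (H0 := exp_pos (-(r*b))).
replace ((1 - exp (- (r * b))) / r - 1 / r) with (- (exp (-(r*b)) / r)) by (field; lra).
rewrite Rabs_Ropp, Rabs_pos_eq.
- apply Rmult_lt_reg_r with r; auto. unfold Rdiv. rewrite Rmult_assoc, Rinv_l by lra. lra.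
- apply Rlt_le. apply Rdiv_lt_0_compat; auto.
Qed.

Lemma mono_lim (F : R -> R) B :
  (forall b b', 0 <= b -> b <= b' -> F b <= F b') ->
  (forall b, 0 <= b -> F b <= B) -> exists l : R, is_lim F p_infty l.
Proof.
intros Hm HB.
set (E := fun y => exists b, 0 <= b /\ y = F b).
assert (Hb : bound E). { exists B. intros y [b [Hb ->]]. auto. }
assert (Hne : exists y, E y). { exists (F 0). exists 0. split; auto; lra. }
destruct (completeness E Hb Hne) as [l [Hub Hlub]].
exists l. apply is_lim_spec. intros eps. simpl.
assert (Hex : exists b0, 0 <= b0 /\ l - eps < F b0).
{ apply NNPP. intros Hn. assert (l <= l - eps).
  { apply Hlub. intros y [b [Hb0 ->]]. apply Rnot_lt_le. intros Hlt. apply Hn. exists b. auto. }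
  destruct eps; simpl in *; lra. }
destruct Hex as [b0 [Hb0 Hlt]].
exists b0. intros b Hbb.
assert (F b0 <= F b) by (apply Hm; lra).
assert (F b <= l) by (apply Hub; exists b; split; auto; lra).
apply Rabs_def1; lra.
Qed.

Lemma lim_le (F G : R -> R) (lf lg : R) :
  (forall b, 0 <= b -> F b <= G b) -> is_lim F p_infty lf -> is_lim G p_infty lg -> lf <= lg.
Proof.
intros H HF HG. apply Rnot_lt_le. intros Hlt.
set (e := (lf - lg)/2).
assert (He : 0 < e) by (unfold e; lra).
apply is_lim_spec in HF. apply is_lim_spec in HG. unfold is_lim' in HF, HG.
destruct (HF (mkposreal e He)) as [M1 H1]. destruct (HG (mkposreal e He)) as [M2 H2].
simpl in *.
set (b := Rmax 0 (Rmax M1 M2) + 1).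
assert (Hb1 : M1 < b) by (unfold b; generalize (Rmax_l M1 M2) (Rmax_r 0 (Rmax M1 M2)); lra).
assert (Hb2 : M2 < b) by (unfold b; generalize (Rmax_r M1 M2) (Rmax_r 0 (Rmax M1 M2)); lra).
assert (Hb0 : 0 <= b) by (unfold b; generalize (Rmax_l 0 (Rmax M1 M2)); lra).
specialize (H1 b Hb1). specialize (H2 b Hb2). specialize (H b Hb0).
apply Rabs_def2 in H1. apply Rabs_def2 in H2. unfold e in *. lra.
Qed.

Lemma ex_RInt_exp r a b : ex_RInt (fun u => exp (-(r*u))) a b.
Proof.
apply ex_RInt_c. intros z. apply cont_d. auto_derive. auto.
Qed.

Lemma comparison (f : R -> R) C r :
  (forall a b, ex_RInt f a b) -> 0 < r ->
  (forall u, 0 <= u -> Rabs (f u) <= C * exp (-(r*u))) ->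
  exists l : R, is_lim (fun b => RInt f 0 b) p_infty l.
Proof.
intros Hf Hr Hb.
set (g := fun u => f u + C * exp (-(r*u))).
assert (Hg : forall a b, ex_RInt g a b).
{ intros a b. apply (ex_RInt_plus f (fun u => C * exp (-(r*u)))). auto.
  apply (ex_RInt_scal (fun u => exp (-(r*u)))). apply ex_RInt_exp. }
assert (HgE : forall b, RInt g 0 b = RInt f 0 b + C * RInt (fun u => exp (-(r*u))) 0 b).
{ intros b. unfold g. rewrite (RInt_plus f (fun u => C * exp (-(r*u)))); auto.
  rewrite (RInt_scal (fun u => exp (-(r*u)))). reflexivity. apply ex_RInt_exp.
  apply (ex_RInt_scal (fun u => exp (-(r*u)))). apply ex_RInt_exp. }
destruct (mono_lim (fun b => RInt g 0 b) (2 * C / r)) as [l Hl].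
- intros b b' H0 H1. rewrite <- (RInt_Chasles g 0 b b'); auto.
  assert (0 <= RInt g b b'). { apply RInt_ge_0; auto. intros x Hx. unfold g.
    specialize (Hb x ltac:(lra)). apply Rabs_le_between in Hb. lra. }
  change (plus (RInt g 0 b) (RInt g b b')) with (RInt g 0 b + RInt g b b'). lra.
- intros b H0.
  assert (RInt g 0 b <= RInt (fun u => 2 * C * exp (-(r*u))) 0 b).
  { apply RInt_le; auto. apply (ex_RInt_scal (fun u => exp (-(r*u)))). apply ex_RInt_exp.
    intros x Hx. unfold g. specialize (Hb x ltac:(lra)). apply Rabs_le_between in Hb. lra. }
  rewrite (RInt_scal (fun u => exp (-(r*u)))) in H by apply ex_RInt_exp.
  rewrite RInt_exp in H by lra. unfold scal in H; simpl in H. unfold mult in H; simpl in H.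
  rewrite Rmult_0_r, Ropp_0, exp_0 in H.
  assert (0 <= C). { specialize (Hb 0 ltac:(lra)). rewrite Rmult_0_r, Ropp_0, exp_0 in Hb.
     generalize (Rabs_pos (f 0)); lra. }
  assert (0 < exp (-(r*b))) by apply exp_pos.
  apply Rle_trans with (1 := H).
  assert (0 < / r) by (apply Rinv_0_lt_compat; auto). unfold Rdiv in *.
  replace (2 * C * / r) with (2 * C * ((1 - 0) * / r)) by ring.
  apply Rmult_le_compat_l. lra. apply Rmult_le_compat_r; lra.
- exists (l - C * (1/r)).
  apply is_lim_ext with (fun b => RInt g 0 b - C * RInt (fun u => exp (-(r*u))) 0 b).
  { intros b. rewrite HgE. ring. }
  apply is_lim_minus'. auto.
  apply (is_lim_scal_l _ C p_infty (1/r)). apply lim_exp; auto.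
Qed.

Lemma bridge (f : R -> R) (l : R) :
  (forall a b, ex_RInt f a b) -> is_lim (fun b => RInt f 0 b) p_infty l ->
  RInt_gen f (at_point 0) (Rbar_locally p_infty) = l.
Proof.
intros Hf Hl.
eapply is_RInt_gen_unique.
intros P HP.
assert (H := Hl P HP). simpl in H.
apply Filter_prod with (fun a => a = 0) (fun b => P (RInt f 0 b)). reflexivity. exact H.
intros a b -> Hb. exists (RInt f 0 b). split; auto. simpl. apply RInt_correct. auto.
Qed.

Lemma RInt_scal_R (g : R -> R) K a b : ex_RInt g a b ->
  RInt (fun u => K * g u) a b = K * RInt g a b.
Proof. intros H. exact (RInt_scal g a b K H). Qed.

Lemma cont_add (f g : R -> R) u : continuous f u -> continuous g u ->
  continuous (fun y => f y + g y) u.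
Proof. intros Hf Hg. exact (continuous_plus (V:=R_NormedModule) f g u Hf Hg). Qed.

Lemma cont_scal (f : R -> R) K u : continuous f u -> continuous (fun y => K * f y) u.
Proof. intros Hf.
exact (continuous_mult (K:=R_AbsRing) (fun _ => K) f u (continuous_const _ _) Hf). Qed.

Lemma lim_abs_le (g : R -> R) K r (lg : R) : 0 < r ->
  (forall u, continuous g u) ->
  (forall u, 0 <= u -> Rabs (g u) <= K * exp (-(r*u))) ->
  is_lim (fun b => RInt g 0 b) p_infty lg -> Rabs lg <= K * (1/r).
Proof.
intros Hr Hc Hb Hl.
assert (Hg : forall a b, ex_RInt g a b) by (intros; apply ex_RInt_c; auto).
assert (HK : is_lim (fun b => K * RInt (fun u => exp (-(r*u))) 0 b) p_infty (K * (1/r))).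
{ apply (is_lim_scal_l _ K p_infty (1/r)). apply lim_exp; auto. }
assert (Hin : forall b, 0 <= b -> Rabs (RInt g 0 b) <= K * RInt (fun u => exp (-(r*u))) 0 b).
{ intros b H0. eapply Rle_trans. apply abs_RInt_le; auto.
  rewrite <- RInt_scal_R by apply ex_RInt_exp.
  apply RInt_le; auto.
  apply ex_RInt_c. intros z. apply continuous_Rabs_comp. auto.
  apply (ex_RInt_scal (fun u => exp (-(r*u)))). apply ex_RInt_exp.
  intros y Hy. apply Hb. lra. }
apply Rabs_le. split.
- assert (- (K * (1/r)) <= lg).
  { apply (lim_le (fun b => - (K * RInt (fun u => exp (-(r*u))) 0 b)) (fun b => RInt g 0 b)); auto.
    intros b Hb0. specialize (Hin b Hb0). apply Rabs_le_between in Hin. lra.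
    apply (is_lim_opp _ p_infty (K*(1/r))) in HK. exact HK. }
  lra.
- apply (lim_le (fun b => RInt g 0 b) (fun b => K * RInt (fun u => exp (-(r*u))) 0 b)); auto.
  intros b Hb0. specialize (Hin b Hb0). apply Rabs_le_between in Hin. lra.
Qed.

Lemma lim_le' (F G : R -> R) (T lf lg : R) :
  (forall b, T <= b -> F b <= G b) -> is_lim F p_infty lf -> is_lim G p_infty lg -> lf <= lg.
Proof.
intros H HF HG. apply Rnot_lt_le. intros Hlt.
set (e := (lf - lg)/2).
assert (He : 0 < e) by (unfold e; lra).
apply is_lim_spec in HF. apply is_lim_spec in HG. unfold is_lim' in HF, HG.
destruct (HF (mkposreal e He)) as [M1 H1]. destruct (HG (mkposreal e He)) as [M2 H2].
simpl in *.
set (b := Rmax T (Rmax M1 M2) + 1).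
assert (Hb1 : M1 < b) by (unfold b; generalize (Rmax_l M1 M2) (Rmax_r T (Rmax M1 M2)); lra).
assert (Hb2 : M2 < b) by (unfold b; generalize (Rmax_r M1 M2) (Rmax_r T (Rmax M1 M2)); lra).
assert (Hb0 : T <= b) by (unfold b; generalize (Rmax_l T (Rmax M1 M2)); lra).
specialize (H1 b Hb1). specialize (H2 b Hb2). specialize (H b Hb0).
apply Rabs_def2 in H1. apply Rabs_def2 in H2. unfold e in *. lra.
Qed.

Lemma lim_pos (phi : R -> R) (l : R) :
  (forall u, continuous phi u) -> (forall u, 0 <= u -> 0 <= phi u) ->
  (forall u, 0 < u -> 0 < phi u) ->
  is_lim (fun b => RInt phi 0 b) p_infty l -> 0 < l.
Proof.
intros Hc H0 Hp Hl.
assert (Hex : forall a b, ex_RInt phi a b) by (intros; apply ex_RInt_c; auto).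
assert (H1 : 0 < RInt phi 0 1).
{ replace 0 with (RInt (fun _ => 0) 0 1) at 1.
  apply RInt_lt. lra. intros; auto. intros; apply continuous_const.
  intros x Hx. apply Hp. lra.
  rewrite RInt_const. unfold scal; simpl; unfold mult; simpl. ring. }
assert (RInt phi 0 1 <= l).
{ apply (lim_le' (fun _ => RInt phi 0 1) (fun b => RInt phi 0 b) 1); auto.
  intros b Hb. rewrite <- (RInt_Chasles phi 0 1 b); auto.
  change (plus (RInt phi 0 1) (RInt phi 1 b)) with (RInt phi 0 1 + RInt phi 1 b).
  assert (0 <= RInt phi 1 b). { apply RInt_ge_0; auto. intros x Hx. apply H0. lra. }
  lra. apply is_lim_const. }
lra.
Qed.

Lemma final_ineq (f1 f2 h : R -> R) (I1 I2 Mv : R) :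
  (forall u, continuous f1 u) -> (forall u, continuous f2 u) -> (forall u, continuous h u) ->
  is_lim (fun b => RInt f1 0 b) p_infty I1 ->
  is_lim (fun b => RInt f2 0 b) p_infty I2 ->
  is_lim (fun b => RInt h 0 b) p_infty Mv ->
  (forall u, 0 <= u -> 0 <= h u) ->
  (forall u, 0 <= u -> f1 u ^ 2 + f2 u ^ 2 <= h u ^ 2) ->
  (forall u, 0 < u -> f1 u ^ 2 + f2 u ^ 2 < h u ^ 2) ->
  sqrt (I1 ^ 2 + I2 ^ 2) < Mv.
Proof.
intros C1 C2 Ch L1 L2 Lh Hh0 Hle Hlt.
set (Nn := sqrt (I1 ^ 2 + I2 ^ 2)).
assert (HN0 : 0 <= Nn) by apply sqrt_pos.
assert (HN2 : Nn * Nn = I1 ^ 2 + I2 ^ 2) by (apply sqrt_sqrt; nra).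
assert (Hpt : forall u, 0 <= u -> I1 * f1 u + I2 * f2 u <= Nn * h u).
{ intros u Hu. specialize (Hle u Hu). specialize (Hh0 u Hu).
  assert ((I1 * f1 u + I2 * f2 u)^2 <= (Nn * h u)^2).
  { replace ((Nn * h u)^2) with ((Nn*Nn) * h u ^ 2) by ring. rewrite HN2.
    assert ((I1 * f1 u + I2 * f2 u)^2 <= (I1^2 + I2^2) * (f1 u ^2 + f2 u ^2)).
    { assert (0 <= (I1 * f2 u - I2 * f1 u)^2) by apply pow2_ge_0. nra. }
    apply Rle_trans with (1 := H). apply Rmult_le_compat_l; nra. }
  assert (0 <= Nn * h u) by nra. nra. }
assert (Hpts : forall u, 0 < u -> 0 < Nn -> I1 * f1 u + I2 * f2 u < Nn * h u).
{ intros u Hu HN. specialize (Hlt u Hu). specialize (Hh0 u ltac:(lra)).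
  assert ((I1 * f1 u + I2 * f2 u)^2 < (Nn * h u)^2).
  { replace ((Nn * h u)^2) with ((Nn*Nn) * h u ^ 2) by ring. rewrite HN2.
    assert ((I1 * f1 u + I2 * f2 u)^2 <= (I1^2 + I2^2) * (f1 u ^2 + f2 u ^2)).
    { assert (0 <= (I1 * f2 u - I2 * f1 u)^2) by apply pow2_ge_0. nra. }
    assert (0 < I1^2 + I2^2) by nra.
    apply Rle_lt_trans with (1 := H). apply Rmult_lt_compat_l; auto. }
  assert (0 <= Nn * h u) by nra. nra. }
destruct (Req_dec Nn 0) as [HZ | HZ].
- rewrite HZ. apply (lim_pos h); auto.
  intros u Hu. specialize (Hlt u Hu). specialize (Hh0 u ltac:(lra)).
  destruct (Rle_lt_or_eq_dec 0 (h u) Hh0); auto. rewrite <- e in Hlt. nra.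
- assert (HNp : 0 < Nn) by lra.
  set (phi := fun u => (Nn * h u + (- I1) * f1 u) + (- I2) * f2 u).
  assert (Cphi : forall u, continuous phi u).
  { intros u. unfold phi. apply cont_add. apply cont_add. apply cont_scal; auto.
    apply cont_scal; auto. apply cont_scal; auto. }
  assert (Lphi : is_lim (fun b => RInt phi 0 b) p_infty ((Nn * Mv + (- I1) * I1) + (- I2) * I2)).
  { assert (E : forall g, (forall u, continuous g u) -> forall a b, ex_RInt g a b)
      by (intros; apply ex_RInt_c; auto).
    apply is_lim_ext with
      (fun b => (Nn * RInt h 0 b + (- I1) * RInt f1 0 b) + (- I2) * RInt f2 0 b).
    { intros b. unfold phi.
      rewrite (RInt_plus (fun u => Nn * h u + (- I1) * f1 u) (fun u => (- I2) * f2 u)).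
      rewrite (RInt_plus (fun u => Nn * h u) (fun u => (- I1) * f1 u)).
      rewrite !RInt_scal_R by (apply E; auto). reflexivity.
      apply E. intros; apply cont_scal; auto.
      apply E. intros; apply cont_scal; auto.
      apply E. intros; apply cont_add; apply cont_scal; auto.
      apply E. intros; apply cont_scal; auto. }
    apply is_lim_plus'. apply is_lim_plus'.
    apply (is_lim_scal_l _ Nn p_infty Mv); auto.
    apply (is_lim_scal_l _ (-I1) p_infty I1); auto.
    apply (is_lim_scal_l _ (-I2) p_infty I2); auto. }
  assert (0 < (Nn * Mv + (- I1) * I1) + (- I2) * I2).
  { apply (lim_pos phi); auto.
    intros u Hu. unfold phi. specialize (Hpt u Hu). lra.
    intros u Hu. unfold phi. specialize (Hpts u Hu HNp). lra. }
  assert (Nn * Mv > Nn * Nn) by nra.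
  nra.
Qed.

Lemma cont_sub (f g : R -> R) u : continuous f u -> continuous g u ->
  continuous (fun y => f y - g y) u.
Proof. intros Hf Hg. exact (continuous_minus (V:=R_NormedModule) f g u Hf Hg). Qed.

Definition qf c u := exp (-(c*u)).
Definition Ef mu c u := exp (-((mu*c)*u)).
Definition Df c cx u := 1 - 2 * qf c u * cx + qf c u ^ 2.
Definition fg (g : R -> R) x mu c u :=
  c * Ef mu c u * (qf c u * g (INR 1 * x) - qf c u ^ 2 * g (INR 0 * x)) / Df c (cos x) u.
Definition Sg (g : R -> R) x mu c K u :=
  c * Ef mu c u * (qf c u * g (INR 1 * x) - qf c u ^ 2 * g (INR 0 * x)
     - qf c u ^ (S K) * g (INR (S K) * x) + qf c u ^ (S (S K)) * g (INR K * x)) / Df c (cos x) u.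
Definition term (g : R -> R) x mu c K u :=
  c * g (INR (S K) * x) * (Ef mu c u * qf c u ^ (S K)).

Lemma Df_eq c s x u : c = 2 * s -> cos x = 1 - 2 * s * s ->
  Df c (cos x) u = (1 - qf c u)^2 + c^2 * qf c u.
Proof. intros -> Hx. unfold Df. rewrite Hx. ring. Qed.

Lemma qf_pos c u : 0 < qf c u.
Proof. apply exp_pos. Qed.

Lemma qf_le1 c u : 0 <= c -> 0 <= u -> qf c u <= 1.
Proof. intros. unfold qf. rewrite <- exp_0. destruct (Req_dec (c*u) 0).
  rewrite H1, Ropp_0. lra. left. apply exp_increasing. nra. Qed.

Lemma Df_pos c s x u : 0 < s -> c = 2 * s -> cos x = 1 - 2 * s * s -> 0 < Df c (cos x) u.
Proof. intros Hs Hc Hx. rewrite (Df_eq c s) by auto. generalize (qf_pos c u). intros.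
  subst c. assert (0 < (2*s)^2 * qf (2*s) u) by (apply Rmult_lt_0_compat; nra).
  assert (0 <= (1 - qf (2*s) u)^2) by apply pow2_ge_0. lra. Qed.

Lemma Df_ge c s x u : 0 < s -> s <= 1 -> c = 2 * s -> cos x = 1 - 2 * s * s -> 0 <= u ->
  s * s <= Df c (cos x) u.
Proof. intros Hs Hs1 Hc Hx Hu. rewrite (Df_eq c s) by auto.
  assert (0 < c) by lra.
  generalize (qf_pos c u) (qf_le1 c u ltac:(lra) Hu). intros. subst c.
  set (q := qf (2*s) u) in *.
  assert (Hss : s*s <= 1) by nra.
  assert (Hq2 : 0 <= (1-q)^2) by apply pow2_ge_0.
  assert (s*s*(1-q)^2 <= 1*(1-q)^2) by (apply Rmult_le_compat_r; auto).
  assert (0 <= s*s*(2*q + q*q)) by (apply Rmult_le_pos; nra).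
  nra. Qed.

Lemma g_rec (g : R -> R) x K :
  (forall a b, g (a + b) + g (a - b) = 2 * cos b * g a) ->
  g (INR (S (S K)) * x) + g (INR K * x) = 2 * cos x * g (INR (S K) * x).
Proof. intros H. rewrite <- H. f_equal; f_equal; rewrite !S_INR; ring. Qed.

Lemma cos_rec a b : cos (a + b) + cos (a - b) = 2 * cos b * cos a.
Proof. rewrite cos_plus, cos_minus. ring. Qed.
Lemma sin_rec a b : sin (a + b) + sin (a - b) = 2 * cos b * sin a.
Proof. rewrite sin_plus, sin_minus. ring. Qed.

Lemma Sg_step g x mu c s K u : 0 < s -> c = 2 * s -> cos x = 1 - 2 * s * s ->
  (forall a b, g (a + b) + g (a - b) = 2 * cos b * g a) ->
  Sg g x mu c (S K) u = Sg g x mu c K u + term g x mu c K u.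
Proof.
intros Hs Hc Hx Hg.
assert (HD := Df_pos c s x u Hs Hc Hx).
generalize (g_rec g x K Hg). intros Hr.
unfold Sg, term.
set (A2 := g (INR (S (S K)) * x)) in *.
set (A1 := g (INR (S K) * x)) in *.
set (A0 := g (INR K * x)) in *.
assert (A2 = 2 * cos x * A1 - A0) by lra.
rewrite H.
unfold Df in *. set (q := qf c u) in *.
simpl pow. field. lra.
Qed.

Lemma Sg_zero g x mu c u : Sg g x mu c 0 u = 0.
Proof. unfold Sg. rewrite pow_1. unfold Rdiv. ring. Qed.

Lemma cont_Sg g x mu c s K u : 0 < s -> c = 2 * s -> cos x = 1 - 2 * s * s ->
  continuous (Sg g x mu c K) u.
Proof. intros Hs Hc Hx. apply cont_d. generalize (Df_pos c s x u Hs Hc Hx). intros HD.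
 unfold Sg, Df, qf, Ef in *. auto_derive. simpl in HD. lra. Qed.

Lemma cont_fg g x mu c s u : 0 < s -> c = 2 * s -> cos x = 1 - 2 * s * s ->
  continuous (fg g x mu c) u.
Proof. intros Hs Hc Hx. apply cont_d. generalize (Df_pos c s x u Hs Hc Hx). intros HD.
 unfold fg, Df, qf, Ef in *. auto_derive. simpl in HD. lra. Qed.

Lemma cont_term g x mu c K u : continuous (term g x mu c K) u.
Proof. apply cont_d. unfold term, qf, Ef. auto_derive. auto. Qed.

Lemma Eq_pow mu c k u : Ef mu c u * qf c u ^ k = exp (- (((mu + INR k) * c) * u)).
Proof. unfold Ef, qf. rewrite exp_pow'. rewrite <- exp_plus. f_equal. ring. Qed.

Lemma RInt_minus_R (f g : R -> R) a b : ex_RInt f a b -> ex_RInt g a b ->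
  RInt (fun u => f u - g u) a b = RInt f a b - RInt g a b.
Proof. intros. exact (RInt_minus f g a b H H0). Qed.

Lemma RInt_plus_R (f g : R -> R) a b : ex_RInt f a b -> ex_RInt g a b ->
  RInt (fun u => f u + g u) a b = RInt f a b + RInt g a b.
Proof. intros. exact (RInt_plus f g a b H H0). Qed.

Lemma lim_term g x mu c K : 0 < c -> -1/2 < mu ->
  is_lim (fun b => RInt (term g x mu c K) 0 b) p_infty (g (INR (S K) * x) / (INR (S K) + mu)).
Proof.
intros Hc Hmu.
assert (Hk : 0 < INR (S K) + mu) by (rewrite S_INR; generalize (pos_INR K); lra).
set (r := (INR (S K) + mu) * c).
assert (Hr : 0 < r) by (unfold r; nra).
apply is_lim_ext with (fun b => (c * g (INR (S K) * x)) * RInt (fun u => exp (-(r*u))) 0 b).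
{ intros b. rewrite <- RInt_scal_R by apply ex_RInt_exp. apply RInt_ext. intros y _.
  unfold term. rewrite Eq_pow. unfold r. rewrite (Rplus_comm mu). reflexivity. }
replace (g (INR (S K) * x) / (INR (S K) + mu)) with ((c * g (INR (S K) * x)) * (1/r)).
apply (is_lim_scal_l _ _ p_infty (1/r)). apply lim_exp; auto.
unfold r. field. lra.
Qed.

Lemma lim_partial g x mu c s N : 0 < s -> c = 2 * s -> cos x = 1 - 2 * s * s -> -1/2 < mu ->
  (forall a b, g (a + b) + g (a - b) = 2 * cos b * g a) ->
  is_lim (fun b => RInt (Sg g x mu c (S N)) 0 b) p_infty
    (sum_n (fun n => g (INR (S n) * x) / (INR (S n) + mu)) N).
Proof.
intros Hs Hc Hx Hmu Hg.
assert (Hc0 : 0 < c) by lra.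
induction N as [|N IH].
- rewrite sum_O. apply is_lim_ext with (fun b => RInt (term g x mu c 0) 0 b).
  intros b. apply RInt_ext. intros y _. rewrite (Sg_step g x mu c s) by auto. rewrite Sg_zero. apply eq_sym, Rplus_0_l.
  apply lim_term; auto.
- rewrite sum_Sn.
  apply is_lim_ext with (fun b => RInt (Sg g x mu c (S N)) 0 b + RInt (term g x mu c (S N)) 0 b).
  intros b. rewrite <- RInt_plus_R. apply RInt_ext. intros y _.
  rewrite (Sg_step g x mu c s (S N) y) by auto. reflexivity.
  apply ex_RInt_c. intros; apply (cont_Sg g x mu c s); auto.
  apply ex_RInt_c. intros; apply cont_term.
  apply (is_lim_plus' _ _ p_infty). auto. apply lim_term; auto.
Qed.

Lemma rem_bound g x mu c s K u : 0 < s -> s <= 1 -> c = 2 * s -> cos x = 1 - 2 * s * s ->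
  (forall y, Rabs (g y) <= 1) -> 0 <= u ->
  Rabs (fg g x mu c u - Sg g x mu c K u) <= (2 * c / (s * s)) * exp (- (((mu + INR (S K)) * c) * u)).
Proof.
intros Hs Hs1 Hc Hx Hg Hu.
assert (HD := Df_ge c s x u Hs Hs1 Hc Hx Hu).
assert (HD0 := Df_pos c s x u Hs Hc Hx).
rewrite <- Eq_pow.
set (D := Df c (cos x) u) in *.
set (q := qf c u) in *.
set (E := Ef mu c u).
set (Q := q ^ S K).
assert (Hq0 : 0 < q) by apply qf_pos.
assert (Hq1 : q <= 1) by (apply qf_le1; lra).
assert (HQ : 0 < Q) by (apply pow_lt; auto).
assert (HE : 0 < E) by apply exp_pos.
set (a1 := g (INR (S K) * x)). set (a0 := g (INR K * x)).
assert (Ha1 := Hg (INR (S K) * x)). assert (Ha0 := Hg (INR K * x)).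
fold a1 in Ha1. fold a0 in Ha0.
replace (fg g x mu c u - Sg g x mu c K u) with ((c * E * Q) * (a1 - q * a0) / D).
2:{ unfold fg, Sg. fold D q E a1 a0. unfold Q. simpl pow. field. lra. }
unfold Rdiv. rewrite !Rabs_mult, Rabs_inv.
rewrite (Rabs_pos_eq c), (Rabs_pos_eq E), (Rabs_pos_eq Q) by lra.
rewrite (Rabs_pos_eq D) by lra.
assert (H1 : Rabs (a1 - q * a0) <= 2).
{ eapply Rle_trans. apply Rabs_triang. rewrite Rabs_Ropp, Rabs_mult, (Rabs_pos_eq q) by lra.
  nra. }
assert (H2 : / D <= / (s * s)) by (apply Rinv_le_contravar; nra).
assert (0 < c * E * Q) by (apply Rmult_lt_0_compat; [apply Rmult_lt_0_compat|]; lra).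
assert (0 <= Rabs (a1 - q * a0)) by apply Rabs_pos.
assert (0 < / D) by (apply Rinv_0_lt_compat; lra).
replace (2 * c * / (s * s) * (E * Q)) with ((c * E * Q) * (2 * / (s * s))) by ring.
rewrite Rmult_assoc. apply Rmult_le_compat_l. lra.
apply Rmult_le_compat; lra.
Qed.

Lemma fg_bound g x mu c s u : 0 < s -> s <= 1 -> c = 2 * s -> cos x = 1 - 2 * s * s ->
  (forall y, Rabs (g y) <= 1) -> 0 <= u ->
  Rabs (fg g x mu c u) <= (2 * c / (s * s)) * exp (- (((mu + INR 1) * c) * u)).
Proof.
intros Hs Hs1 Hc Hx Hg Hu.
replace (fg g x mu c u) with (fg g x mu c u - Sg g x mu c 0 u) by (rewrite Sg_zero; ring).
apply rem_bound; auto.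
Qed.

Lemma series_val g x mu c s : 0 < s -> s <= 1 -> c = 2 * s -> cos x = 1 - 2 * s * s ->
  -1/2 < mu ->
  (forall a b, g (a + b) + g (a - b) = 2 * cos b * g a) ->
  (forall y, Rabs (g y) <= 1) ->
  exists I : R, is_lim (fun b => RInt (fg g x mu c) 0 b) p_infty I /\
    Series (fun n => g (INR (S n) * x) / (INR (S n) + mu)) = I.
Proof.
intros Hs Hs1 Hc Hx Hmu Hrec Hg.
assert (Hc0 : 0 < c) by lra.
assert (Hss : 0 < s * s) by (apply Rmult_lt_0_compat; lra).
destruct (comparison (fg g x mu c) (2 * c / (s * s)) ((mu + INR 1) * c)) as [I HI].
{ intros a b. apply ex_RInt_c. intros; apply (cont_fg g x mu c s); auto. }
{ simpl. nra. }
{ intros u Hu. apply fg_bound; auto. }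
exists I. split; auto.
set (a := fun n => g (INR (S n) * x) / (INR (S n) + mu)).
assert (Hrem : forall N, Rabs (I - sum_n a N) <= (2 * c / (s * s)) * (1 / ((mu + INR (S (S N))) * c))).
{ intros N.
  apply (lim_abs_le (fun u => fg g x mu c u - Sg g x mu c (S N) u)).
  - rewrite S_INR. generalize (pos_INR (S N)). intros. apply Rmult_lt_0_compat; lra.
  - intros u. apply cont_sub. apply (cont_fg g x mu c s); auto.
    apply (cont_Sg g x mu c s); auto.
  - intros u Hu. apply rem_bound; auto.
  - apply is_lim_ext with (fun b => RInt (fg g x mu c) 0 b - RInt (Sg g x mu c (S N)) 0 b).
    intros b. rewrite RInt_minus_R. reflexivity.
    apply ex_RInt_c. intros; apply (cont_fg g x mu c s); auto.
    apply ex_RInt_c. intros; apply (cont_Sg g x mu c s); auto.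
    apply (is_lim_minus' _ _ p_infty). auto. apply (lim_partial g x mu c s); auto. }
unfold Series.
replace (Lim_seq (sum_n a)) with (Finite I). reflexivity.
symmetry. apply is_lim_seq_unique.
apply is_lim_seq_spec. intros eps.
destruct (INR_unbounded (2 / (s * s * eps))) as [N0 HN0].
exists N0. intros n Hn.
specialize (Hrem n).
assert (Hm : INR N0 < mu + INR (S (S n))).
{ rewrite !S_INR. apply le_INR in Hn. lra. }
assert (HN0p : 0 < 2 / (s * s * eps)).
{ apply Rdiv_lt_0_compat. lra. apply Rmult_lt_0_compat; auto. apply cond_pos. }
set (m := mu + INR (S (S n))) in *.
assert (Hmp : 0 < m) by lra.
replace (2 * c / (s * s) * (1 / (m * c))) with (2 / (s * s * m)) in Hrem by (field; lra).
rewrite Rabs_minus_sym.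
eapply Rle_lt_trans. apply Hrem.
assert (Heps := cond_pos eps).
assert (2 / (s * s * eps) < m) by lra.
apply Rmult_lt_compat_r with (r := s * s * eps) in H.
2:{ apply Rmult_lt_0_compat; lra. }
unfold Rdiv in H. rewrite Rmult_assoc, Rinv_l, Rmult_1_r in H.
2:{ apply Rgt_not_eq. apply Rmult_lt_0_compat; lra. }
apply Rmult_lt_reg_r with (s * s * m). apply Rmult_lt_0_compat; lra.
unfold Rdiv. rewrite Rmult_assoc, Rinv_l, Rmult_1_r.
2:{ apply Rgt_not_eq. apply Rmult_lt_0_compat; lra. }
nra.
Qed.

Lemma sinh_gt y : 0 < y -> 2 * y * exp (- y) < 1 - exp (- y) ^ 2.
Proof.
intros Hy.
assert (HT := exp_ge_taylor y 3 ltac:(lra)).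
simpl in HT. 
rewrite exp_Ropp.
set (E := exp y) in *.
assert (HE : 0 < E) by apply exp_pos.

assert (HP : 1 + y + y^2/2 + y^3/6 <= E) by (field_simplify in HT; field_simplify; lra).
assert (E * E - 2 * y * E - 1 > 0).
{ assert (Hd : E - y >= 1 + y^2/2 + y^3/6) by lra.
  assert ((E - y)^2 >= (1 + y^2/2 + y^3/6)^2).
  { assert (0 <= 1 + y^2/2 + y^3/6) by nra. nra. }
  assert ((1 + y^2/2 + y^3/6)^2 - y^2 - 1 > 0).
  { ring_simplify. assert (0 < y^3) by (apply pow_lt; auto). assert (0 < y^4) by (apply pow_lt; auto).
    assert (0 < y^5) by (apply pow_lt; auto). assert (0 < y^6) by (apply pow_lt; auto). lra. }
  nra. }
replace (2 * y * / E) with ((2 * y * E) / (E * E)) by (field; lra).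
replace (1 - (/ E)^2) with ((E * E - 1) / (E * E)) by (field; lra).
apply Rmult_lt_compat_r. apply Rinv_0_lt_compat. nra. lra.
Qed.

Definition hM t u := exp (- (t * u)) / sqrt (u ^ 2 + 1).

Lemma key_ineq c u q : 0 < c -> 0 < u -> q = exp (-(c*u)) -> c^2 * q * u^2 < (1 - q)^2.
Proof.
intros Hc Hu Hq.
set (y := c * u / 2).
assert (Hy : 0 < y) by (unfold y; nra).
assert (Hs := sinh_gt y Hy).
set (p := exp (-y)) in *.
assert (Hp : 0 < p) by apply exp_pos.
assert (Hqp : q = p ^ 2). { rewrite Hq. unfold p. rewrite exp_pow'. f_equal. unfold y. simpl. field. }
assert (c * u = 2 * y) by (unfold y; field).
replace (c^2 * q * u^2) with ((2 * y * p)^2) by (rewrite Hqp; replace (c^2*p^2*u^2) with ((c*u)^2*p^2) by ring; rewrite H; ring).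
rewrite Hqp.
assert (0 < 2 * y * p) by nra.
nra.
Qed.

Lemma key_ineq' c u q : 0 < c -> 0 <= u -> q = exp (-(c*u)) -> c^2 * q * u^2 <= (1 - q)^2.
Proof.
intros Hc Hu Hq. destruct (Req_dec u 0) as [H0|H0].
- subst u. assert (0 <= (1-q)^2) by apply pow2_ge_0. nra.
- left. apply key_ineq; auto. lra.
Qed.

Lemma alg1 c E q cx sx D : sx^2 = 1 - cx^2 -> D = 1 - 2*q*cx + q^2 -> D <> 0 ->
 (c*E*(q*cx - q^2*1)/D)^2 + (c*E*(q*sx - q^2*0)/D)^2 = c^2*E^2*q^2/D.
Proof.
intros Hs HD Hn.
replace ((c*E*(q*sx - q^2*0)/D)^2) with (c^2*E^2*q^2*(sx^2)/D^2) by (field; auto).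
rewrite Hs. rewrite HD in *. field. auto.
Qed.

Lemma pt_diff x mu c s u : 0 < s -> c = 2 * s -> cos x = 1 - 2 * s * s ->
  hM ((2*mu+1)*s) u ^ 2 - (fg cos x mu c u ^ 2 + fg sin x mu c u ^ 2) =
  Ef mu c u ^ 2 * qf c u * ((1 - qf c u)^2 - c^2 * qf c u * u^2) / (Df c (cos x) u * (u^2+1)).
Proof.
intros Hs Hc Hx.
assert (HD := Df_pos c s x u Hs Hc Hx).
assert (Hh : hM ((2*mu+1)*s) u ^ 2 = Ef mu c u ^ 2 * qf c u / (u^2+1)).
{ unfold hM. unfold Rdiv. rewrite Rpow_mult_distr. rewrite pow_inv. rewrite pow2_sqrt.
  2:{ assert (0 <= u^2) by apply pow2_ge_0. lra. }
  f_equal. unfold Ef, qf. rewrite !exp_pow'. rewrite <- exp_plus. f_equal. simpl. rewrite Hc. ring. }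
rewrite Hh.
unfold fg.
replace (INR 1 * x) with x by (simpl; ring).
replace (INR 0 * x) with 0 by (simpl; ring).
rewrite cos_0, sin_0.
rewrite (alg1 c (Ef mu c u) (qf c u) (cos x) (sin x) (Df c (cos x) u)).
3: reflexivity. 3: lra.
2:{ generalize (sin2_cos2 x). unfold Rsqr. intros. simpl. lra. }
rewrite (Df_eq c s x u) in * by auto.
assert (Hu : 0 < u^2 + 1) by (assert (0 <= u^2) by apply pow2_ge_0; lra).
field. lra.
Qed.

Lemma pt_le x mu c s u : 0 < s -> c = 2 * s -> cos x = 1 - 2 * s * s -> 0 <= u ->
  fg cos x mu c u ^ 2 + fg sin x mu c u ^ 2 <= hM ((2*mu+1)*s) u ^ 2.
Proof.
intros Hs Hc Hx Hu.
assert (H := pt_diff x mu c s u Hs Hc Hx).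
assert (HD := Df_pos c s x u Hs Hc Hx).
assert (Hk := key_ineq' c u (qf c u) ltac:(lra) Hu eq_refl).
assert (0 <= Ef mu c u ^ 2 * qf c u * ((1 - qf c u)^2 - c^2 * qf c u * u^2) / (Df c (cos x) u * (u^2+1))).
{ unfold Rdiv. apply Rmult_le_pos. apply Rmult_le_pos. apply Rmult_le_pos.
  apply pow2_ge_0. left; apply qf_pos. lra. left. apply Rinv_0_lt_compat.
  apply Rmult_lt_0_compat. auto. assert (0 <= u^2) by apply pow2_ge_0; lra. }
lra.
Qed.

Lemma pt_lt x mu c s u : 0 < s -> c = 2 * s -> cos x = 1 - 2 * s * s -> 0 < u ->
  fg cos x mu c u ^ 2 + fg sin x mu c u ^ 2 < hM ((2*mu+1)*s) u ^ 2.
Proof.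
intros Hs Hc Hx Hu.
assert (H := pt_diff x mu c s u Hs Hc Hx).
assert (HD := Df_pos c s x u Hs Hc Hx).
assert (Hk := key_ineq c u (qf c u) ltac:(lra) Hu eq_refl).
assert (0 < Ef mu c u ^ 2 * qf c u * ((1 - qf c u)^2 - c^2 * qf c u * u^2) / (Df c (cos x) u * (u^2+1))).
{ unfold Rdiv. apply Rmult_lt_0_compat. apply Rmult_lt_0_compat. apply Rmult_lt_0_compat.
  apply pow_lt, exp_pos. apply qf_pos. lra. apply Rinv_0_lt_compat.
  apply Rmult_lt_0_compat. auto. assert (0 <= u^2) by apply pow2_ge_0; lra. }
lra.
Qed.

Lemma cont_hM t u : continuous (hM t) u.
Proof. apply cont_d. unfold hM. auto_derive.
 assert (0 <= u*(u*1)) by nra. split. lra. split; auto. apply Rgt_not_eq. apply sqrt_lt_R0. lra. Qed.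

Lemma hM_pos t u : 0 < hM t u.
Proof. unfold hM. apply Rdiv_lt_0_compat. apply exp_pos. apply sqrt_lt_R0.
 assert (0 <= u^2) by apply pow2_ge_0. lra. Qed.

Lemma hM_le t u : Rabs (hM t u) <= 1 * exp (- (t * u)).
Proof. rewrite Rabs_pos_eq by (left; apply hM_pos). unfold hM.
 assert (H1 : 1 <= sqrt (u^2 + 1)). { rewrite <- sqrt_1 at 1. apply sqrt_le_1_alt.
   assert (0 <= u^2) by apply pow2_ge_0. lra. }
 assert (H0 := exp_pos (-(t*u))).
 unfold Rdiv. rewrite Rmult_1_l. rewrite <- (Rmult_1_r (exp (-(t*u)))) at 2.
 apply Rmult_le_compat_l. lra. assert (/ sqrt (u^2+1) <= / 1) by (apply Rinv_le_contravar; lra). rewrite Rinv_1 in H. exact H. Qed.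

Lemma M_lim t : 0 < t -> exists Mv : R,
  is_lim (fun b => RInt (hM t) 0 b) p_infty Mv /\ M t = Mv.
Proof.
intros Ht.
destruct (comparison (hM t) 1 t) as [Mv HMv]; auto.
intros a b. apply ex_RInt_c. intros; apply cont_hM.
intros u _. apply hM_le.
exists Mv. split; auto.
unfold M. apply (bridge (hM t)); auto.
intros a b. apply ex_RInt_c. intros; apply cont_hM.
Qed.

Lemma abs_cos_le y : Rabs (cos y) <= 1.
Proof. apply Rabs_le. apply COS_bound. Qed.
Lemma abs_sin_le y : Rabs (sin y) <= 1.
Proof. apply Rabs_le. apply SIN_bound. Qed.

Lemma part_a x mu : 0 < sin (x/2) -> -1/2 < mu ->
  Cmod (L x mu) < M ((2*mu+1) * sin (x/2)).
Proof.
intros Hs Hmu.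
set (s := sin (x/2)) in *.
set (c := 2 * s).
assert (Hc : c = 2 * s) by reflexivity.
assert (Hs1 : s <= 1) by (unfold s; apply SIN_bound).
assert (Hx : cos x = 1 - 2 * s * s).
{ unfold s. rewrite <- cos_2a_sin. f_equal. field. }
destruct (series_val cos x mu c s) as [I1 [HI1 HS1]]; auto.
  intros; apply cos_rec. apply abs_cos_le.
destruct (series_val sin x mu c s) as [I2 [HI2 HS2]]; auto.
  intros; apply sin_rec. apply abs_sin_le.
assert (Ht : 0 < (2*mu+1)*s) by nra.
destruct (M_lim _ Ht) as [Mv [HMv HMe]].
rewrite HMe.
replace (Cmod (L x mu)) with (sqrt (I1 ^ 2 + I2 ^ 2)).
2:{ unfold Cmod, L. simpl fst. simpl snd. unfold L_re, L_im. rewrite HS1, HS2. reflexivity. }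
apply (final_ineq (fg cos x mu c) (fg sin x mu c) (hM ((2*mu+1)*s))); auto.
- intros; apply (cont_fg cos x mu c s); auto.
- intros; apply (cont_fg sin x mu c s); auto.
- intros; apply cont_hM.
- intros; left; apply hM_pos.
- intros; apply (pt_le x mu c s); auto.
- intros; apply (pt_lt x mu c s); auto.
Qed.

Lemma sq_pos u : 0 < u^2 + 1.
Proof. assert (0 <= u^2) by apply pow2_ge_0. lra. Qed.

Lemma sqrt_gt u : u < sqrt (u^2 + 1).
Proof. destruct (Rlt_or_le u 0). generalize (sqrt_pos (u^2+1)); lra.
 rewrite <- (sqrt_pow2 u) at 1 by auto. apply sqrt_lt_1_alt. split. apply pow2_ge_0. lra. Qed.

Lemma RInt_piece1 t T : 0 < t -> 0 <= T ->
  RInt (fun u => / sqrt (u^2+1) - / sqrt (T^2+1) + / sqrt (T^2+1) * exp (-(t*u))) 0 T =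
  ln (T + sqrt (T^2+1)) - / sqrt (T^2+1) * T + / sqrt (T^2+1) * (1 - exp (-(t*T))) / t.
Proof.
intros Ht HT.
apply is_RInt_unique.
set (wT := / sqrt (T^2+1)).
set (F := fun u => ln (u + sqrt (u^2+1)) - wT * u - wT * exp (-(t*u)) / t).
replace (ln (T + sqrt (T^2+1)) - wT * T + wT * (1 - exp (-(t*T))) / t) with (minus (F T) (F 0)).
2:{ unfold minus, plus, opp, F; simpl.
    replace (0 * (0 * 1) + 1) with 1 by ring. replace (t * 0) with 0 by ring.
    rewrite Ropp_0, exp_0, sqrt_1, Rplus_0_l, ln_1. field. lra. }
apply (is_RInt_derive (V:=R_CompleteNormedModule) F).
- intros u Hu. rewrite Rmin_left in Hu by lra. unfold F. auto_derive.
  + assert (H2 := sq_pos u). simpl in *. split. lra. split; auto.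
    assert (0 < sqrt (u * (u * 1) + 1)) by (apply sqrt_lt_R0; lra). lra.
  + assert (H1 := sqrt_gt u). assert (H2 := sq_pos u). simpl in *.
    replace (u ^ 2) with (u * (u * 1)) by ring.
    set (S := sqrt (u * (u * 1) + 1)) in *.
    assert (Hsp : 0 < S) by (apply sqrt_lt_R0; lra).
    assert (E : (1 + 1 * ((1 + 1) * (u * 1)) * / (2 * S)) * / (u + S) = / S) by (field; split; lra).
    rewrite E. field. lra.
- intros u _. apply cont_d. auto_derive. assert (H2 := sq_pos u). simpl in *. split. lra.
  split; auto. apply Rgt_not_eq. apply sqrt_lt_R0. lra.
Qed.

Lemma M_bound t : 0 < t -> t <= 1 -> M t <= ln (1/t) + ln (1 + sqrt 2).
Proof.
intros Ht Ht1.
destruct (M_lim t Ht) as [Mv [HMv HMe]]. rewrite HMe.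
set (T := 1 / t).
assert (HT1 : 1 <= T) by (unfold T; apply Rmult_le_reg_r with t; auto; unfold Rdiv; rewrite Rmult_assoc, Rinv_l; lra).
assert (HtT : t * T = 1) by (unfold T; field; lra).
set (wT := / sqrt (T^2+1)).
assert (HwT : 0 < wT) by (apply Rinv_0_lt_compat, sqrt_lt_R0, sq_pos).
assert (Hc : forall a b, ex_RInt (hM t) a b) by (intros; apply ex_RInt_c; intros; apply cont_hM).
set (phi1 := fun u => / sqrt (u^2+1) - wT + wT * exp (-(t*u))).
assert (Hphi : forall a b, ex_RInt phi1 a b).
{ intros. apply ex_RInt_c. intros z. apply cont_d. unfold phi1. auto_derive.
  assert (H2 := sq_pos z). simpl in *. split. lra. split; auto. apply Rgt_not_eq, sqrt_lt_R0. lra. }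
assert (Hclaim : forall b, T <= b -> RInt (hM t) 0 b <= ln (T + sqrt (T^2+1))).
{ intros b Hb.
  rewrite <- (RInt_Chasles (hM t) 0 T b) by auto.
  change (plus (RInt (hM t) 0 T) (RInt (hM t) T b)) with (RInt (hM t) 0 T + RInt (hM t) T b).
  assert (H1 : RInt (hM t) 0 T <= RInt phi1 0 T).
  { apply RInt_le; auto. lra. intros u Hu. unfold hM, phi1.
    assert (He : exp (-(t*u)) <= 1). { rewrite <- exp_0. destruct (Req_dec u 0). subst u.
      rewrite Rmult_0_r, Ropp_0. lra. left. apply exp_increasing. nra. }
    assert (He0 := exp_pos (-(t*u))).
    assert (Hw : wT <= / sqrt (u^2+1)).
    { unfold wT. apply Rinv_le_contravar. apply sqrt_lt_R0, sq_pos. apply sqrt_le_1_alt.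
      assert (u^2 <= T^2) by (apply pow_incr; lra). lra. }
    unfold Rdiv. 
    assert (0 <= (1 - exp (-(t*u))) * (/ sqrt (u^2+1) - wT)) by (apply Rmult_le_pos; lra).
    nra. }
  assert (H2 : RInt (hM t) T b <= RInt (fun u => wT * exp (-(t*u))) T b).
  { apply RInt_le; auto. apply (ex_RInt_scal (fun u => exp (-(t*u)))). apply ex_RInt_exp.
    intros u Hu. unfold hM. unfold Rdiv. rewrite Rmult_comm.
    assert (He0 := exp_pos (-(t*u))).
    apply Rmult_le_compat_r. lra.
    unfold wT. apply Rinv_le_contravar. apply sqrt_lt_R0, sq_pos. apply sqrt_le_1_alt.
    assert (T^2 <= u^2) by (apply pow_incr; lra). lra. }
  rewrite RInt_scal_R in H2 by apply ex_RInt_exp.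
  rewrite RInt_exp in H2 by lra.
  unfold phi1 in H1. unfold wT in H1. rewrite RInt_piece1 in H1 by lra. fold wT in H1.
  assert (Hb0 := exp_pos (-(t*b))).
  replace (t * T) with 1 in * by lra.
  assert (wT * ((exp (- (1)) - exp (- (t * b))) / t) <= wT * (exp (-(1)) / t)).
  { apply Rmult_le_compat_l. lra. unfold Rdiv. apply Rmult_le_compat_r.
    left; apply Rinv_0_lt_compat; lra. lra. }
  assert (wT * T = wT * (1 / t)) by reflexivity.
  assert (wT * (1 - exp (-(1))) / t + wT * (exp (-(1)) / t) = wT * (1/t)) by (field; lra).
  lra. }
assert (HMb : Mv <= ln (T + sqrt (T^2+1))).
{ apply (lim_le' (fun b => RInt (hM t) 0 b) (fun _ => ln (T + sqrt (T^2+1))) T); auto.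
  apply is_lim_const. }
eapply Rle_trans. apply HMb.
rewrite <- ln_mult.
2:{ lra. }
2:{ assert (0 <= sqrt 2) by apply sqrt_pos. lra. }
apply ln_le.
{ assert (0 < sqrt (T^2+1)) by (apply sqrt_lt_R0, sq_pos). lra. }
fold T.
assert (sqrt (T^2+1) <= sqrt 2 * T).
{ assert (E : sqrt 2 * T = sqrt (2 * T^2)) by (rewrite sqrt_mult_alt, sqrt_pow2; lra).
  rewrite E. apply sqrt_le_1_alt. assert (1 <= T^2) by nra. lra. }
lra.
Qed.

Lemma t0_prop (y : R) : Rbar_lt t0 y -> M y < arccot y.
Proof.
intros H.
set (E := fun s => 0 < s /\ forall t, s < t -> M t < arccot t).
destruct (classic (exists s, E s /\ s < y)) as [[s [[_ Hs] Hsy]] | Hn].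
- apply Hs; auto.
- exfalso.
  assert (Hlb : is_lb_Rbar E y).
  { intros z Hz. simpl. apply Rnot_lt_le. intros Hzy. apply Hn. exists z. auto. }
  destruct (Glb_Rbar_correct E) as [_ Hg].
  specialize (Hg y Hlb).
  unfold t0 in H. fold E in H.
  apply (Rbar_lt_not_le _ _ H). exact Hg.
Qed.

Lemma Cmod_cexpi a : Cmod (cexpi a) = 1.
Proof. unfold Cmod, cexpi. simpl fst. simpl snd.
 replace (cos a ^ 2 + sin a ^ 2) with 1. apply sqrt_1.
 generalize (sin2_cos2 a). unfold Rsqr. intros. simpl. lra. Qed.

Theorem theorem3 (x : R) (hx0 : 0 < x) (hxpi : x < PI) :
  (* (a), first form *)
  (forall mu : R, -1/2 < mu ->
     Cmod (L x mu) < M ((2 * mu + 1) * sin (x / 2))) /\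
  (* (a), equivalent second form *)
  (forall lam : R, 0 < lam ->
     Cmod (LL x lam) < M (lam * sin x)) /\
  (* (b) *)
  (forall lam : R, 0 < lam -> Rbar_lt t0 (lam * sin x) ->
     Cmod (LL x lam) < arccot (lam * sin x)) /\
  (* (c) *)
  (forall mu : R, -1/2 < mu -> (2 * mu + 1) * sin (x / 2) < 1 ->
     Cmod (L x mu) < ln (1 / ((2 * mu + 1) * sin (x / 2))) + ln (1 + sqrt 2)).
Proof.
assert (Hs2 : 0 < sin (x/2)) by (apply sin_gt_0; lra).
assert (Hsx : 0 < sin x) by (apply sin_gt_0; lra).
assert (HA : forall mu : R, -1/2 < mu -> Cmod (L x mu) < M ((2 * mu + 1) * sin (x / 2))).
{ intros mu Hmu. apply part_a; auto. }
assert (HB : forall lam : R, 0 < lam -> Cmod (LL x lam) < M (lam * sin x)).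
{ intros lam Hlam. unfold LL. rewrite Cmod_mult, Cmod_cexpi, Rmult_1_l.
  replace (lam * sin x) with ((2 * ((lam - 1)/2) + 1) * sin (2 * x / 2)).
  apply part_a. replace (2 * x / 2) with x by field. auto. lra.
  replace (2 * x / 2) with x by field. field. }
split; [exact HA|]. split; [exact HB|]. split.
- intros lam Hlam Ht. eapply Rlt_trans. apply HB; auto. apply t0_prop; auto.
- intros mu Hmu Ht. eapply Rlt_le_trans. apply HA; auto. apply M_bound. nra. lra.
Qed.
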